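(* Let $\mathbb{K}$ be a field with algebraic closure $\overline{\mathbb{K}}$, $\nu$ a Krull valuation on $\mathbb{K}[x]$, $\mu$ a valuation on $\overline{\mathbb{K}}[x]$ extending $\nu$, $Q\in\mathbb{K}[x]$ a key polynomial for $\nu$ and $a\in\overline{\mathbb{K}}$ an optimizing root of $Q$. Then $\mu_{x-a}(f)=\nu_Q(f)$ for every $f\in\mathbb{K}[x]$.
   Context: Truncation: for a valuation $\nu$ on $L[x]$ ($L$ a field) and non-constant $q\in L[x]$, every $f$ has a unique $q$-expansion $f=f_0+f_1q+\dots+f_sq^s$ with $\deg f_i<\deg q$; set $\nu_q(f)=\min_i\nu(f_iq^i)$. Thus $\mu_{x-a}(\sum_i c_i(x-a)^i)=\min_i\{\mu(c_i)+i\mu(x-a)\}$ for $c_i\in\overline{\mathbb{K}}$. Key polynomials: for $\nu$ Krull and nonzero $f\in\mathbb{K}[x]$, with Hasse derivatives $\partial_bf=\sum_{i\ge b}\binom{i}{b}a_ix^{i-b}$ for $f=\sum a_ix^i$, set $\epsilon(f)=\max_{1\le b\le\deg f}(\nu(f)-\nu(\partial_bf))/b$ (in the divisible hull of the value group) if $\deg f>0$, and $\epsilon(f)=-\infty$ if $f$ is constant. A monic $Q$ is a key polynomial for $\nu$ if for all $f$, $\epsilon(f)\ge\epsilon(Q)$ implies $\deg f\ge\deg Q$. Optimizing root: for non-constant $f\in\mathbb{K}[x]$, $\delta(f)=\max\{\mu(x-c): c\in\overline{\mathbb{K}}, f(c)=0\}$, and a root $c$ of $f$ with $\mu(x-c)=\delta(f)$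 is an optimizing root. *)

(* Defs.v *)
From HB Require Import structures.
From mathcomp Require Import all_boot all_order all_algebra all_field.
Set Implicit Arguments. Unset Strict Implicit. Unset Printing Implicit Defensive.
Import Order.TTheory GRing.Theory Num.Theory.
Local Open Scope ring_scope.

(* Values of valuations: an ordered (divisible) group, realised as the additive
   group of an arbitrary real field R (every ordered abelian group embeds in
   one, by Hahn's embedding theorem).  [None] stands for +oo. *)
Section Vals.
Variable R : realFieldType.

Definition vle (a b : option R) : bool :=
  match b, a with
  | None, _ => true
  | Some _, None => false
  | Some y, Some x => x <= y
  end.
Definition vmin (a b : option R) : option R := if vle a b then a else b.
Definition vadd (a b : option R) : option R :=
  match a, b with Some x, Some y => Some (x + y) | _, _ => None end.

(* order on R ∪ {-oo}, None = -oo (used for epsilon) *)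
Definition ele (a b : option R) : bool :=
  match a, b with
  | None, _ => true
  | Some _, None => false
  | Some x, Some y => x <= y
  end.
Definition emax (a b : option R) : option R := if ele a b then b else a.
End Vals.

Record is_valuation (L : fieldType) (R : realFieldType)
    (v : {poly L} -> option R) : Prop := {
  val0 : v 0 = None;
  val_fin : forall f, f != 0 -> v f != None;
  val1 : v 1 = Some 0;
  valM : forall f g, v (f * g) = vadd (v f) (v g);
  valD : forall f g, vle (vmin (v f) (v g)) (v (f + g))
}.

(* q-expansion coefficients: f = sum_i f_i q^i with deg f_i < deg q *)
Definition qexp_coef (L : fieldType) (q f : {poly L}) (i : nat) : {poly L} :=
  (f %/ q ^+ i) %% q.

Definition trunc (L : fieldType) (R : realFieldType) (v : {poly L} -> option R)
    (q f : {poly L}) : option R :=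
  \big[@vmin R/None]_(i < size f) v (qexp_coef q f i * q ^+ i).

(* epsilon(f) = max_{1 <= b <= deg f} (nu(f) - nu(Hasse_b f)) / b, with
   None = -oo (value for constant f, or terms where nu(Hasse_b f) = +oo). *)
Definition eps_term (K : fieldType) (R : realFieldType) (v : {poly K} -> option R)
    (f : {poly K}) (b : nat) : option R :=
  match v f, v (nderivn b f) with
  | Some u, Some w => Some ((u - w) / b%:R)
  | _, _ => None
  end.
Definition eps (K : fieldType) (R : realFieldType) (v : {poly K} -> option R)
    (f : {poly K}) : option R :=
  \big[@emax R/None]_(1 <= b < size f) eps_term v f b.

Definition key_poly (K : fieldType) (R : realFieldType) (v : {poly K} -> option R)
    (Q : {poly K}) : Prop :=
  Q \is monic /\
  forall f : {poly K}, ele (eps v Q) (eps v f) -> (size Q <= size f)%N.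

Definition optimizing_root (L : fieldType) (R : realFieldType)
    (mu : {poly L} -> option R) (f : {poly L}) (c : L) : Prop :=
  (1 < size f)%N /\ root f c /\
  forall c', root f c' -> vle (mu ('X - c'%:P)) (mu ('X - c%:P)).

(* Main.v *)
Require Import Defs.
From HB Require Import structures.
From mathcomp Require Import all_boot all_order all_algebra all_field.
From mathcomp Require Import ring lra zify.
Set Implicit Arguments. Unset Strict Implicit. Unset Printing Implicit Defensive.
Import Order.TTheory GRing.Theory Num.Theory.
Local Open Scope ring_scope.

Lemma vminA (R : realFieldType) : associative (@vmin R).
Proof.
move=> [x|] [y|] [z|]; rewrite /vmin /vle /=;
do ?[case: leP => ? /=]; try done;
try (congr Some; apply/eqP; rewrite eq_le; apply/andP; split; lra); lra.
Qed.
Lemma vminC (R : realFieldType) : commutative (@vmin R).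
Proof.
move=> [x|] [y|]; rewrite /vmin /vle /=;
do ?[case: leP => ? /=]; try done;
try (congr Some; apply/eqP; rewrite eq_le; apply/andP; split; lra); lra.
Qed.
Lemma vmin1l (R : realFieldType) : left_id None (@vmin R).
Proof. by case. Qed.
HB.instance Definition _ (R : realFieldType) :=
  Monoid.isComLaw.Build (option R) None (@vmin R) (@vminA R) (@vminC R) (@vmin1l R).

Section Opt.
Variable R : realFieldType.
Implicit Types (a b : option R) (l : R).

Definition oge l a : bool := if a is Some u then l <= u else true.
Definition ogt l a : bool := if a is Some u then l < u else true.

Lemma oge_vle l a b : oge l a -> vle a b -> oge l b.
Proof. by case: a => [u|]; case: b => [w|] //= h1 h2; apply: le_trans h2. Qed.
Lemma ogt_vle l a b : ogt l a -> vle a b -> ogt l b.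
Proof. by case: a => [u|]; case: b => [w|] //= h1 h2; apply: lt_le_trans h2. Qed.
Lemma oge_vmin l a b : oge l a -> oge l b -> oge l (vmin a b).
Proof. by rewrite /vmin; case: ifP. Qed.
Lemma ogt_vmin l a b : ogt l a -> ogt l b -> ogt l (vmin a b).
Proof. by rewrite /vmin; case: ifP. Qed.
Lemma oge_vadd l1 l2 a b : oge l1 a -> oge l2 b -> oge (l1 + l2) (vadd a b).
Proof. by case: a => [u|]; case: b => [w|] //= h1 h2; apply: lerD. Qed.
Lemma ogt_vadd l1 l2 a b : ogt l1 a -> oge l2 b -> ogt (l1 + l2) (vadd a b).
Proof. by case: a => [u|]; case: b => [w|] //= h1 h2; apply: ltr_leD. Qed.
Lemma ogt_vadd' l1 l2 a b : oge l1 a -> ogt l2 b -> ogt (l1 + l2) (vadd a b).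
Proof. by case: a => [u|]; case: b => [w|] //= h1 h2; apply: ler_ltD. Qed.
Lemma ogt_oge l a : ogt l a -> oge l a.
Proof. by case: a => //= u /ltW. Qed.
Lemma oge_mono l l' a : l' <= l -> oge l a -> oge l' a.
Proof. by case: a => //= u h1 h2; apply: le_trans h2. Qed.
Lemma ogt_mono l l' a : l' < l -> oge l a -> ogt l' a.
Proof. by case: a => //= u h1 h2; apply: lt_le_trans h2. Qed.
Lemma vmin_eqr l a : oge l a -> vmin a (Some l) = Some l.
Proof.
rewrite /vmin; case: a => [u|] //= h; case: ifP => // h2.
by congr Some; apply/eqP; rewrite eq_le h h2.
Qed.
Lemma vmin_eql l a : oge l a -> vmin (Some l) a = Some l.
Proof. by rewrite /vmin; case: a => [u|] //= ->. Qed.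
Lemma oge_vmin_big n (h : nat -> option R) l :
  (forall i, (i < n)%N -> oge l (h i)) -> oge l (\big[@vmin R/None]_(i < n) h i).
Proof.
move=> H; elim: n H => [|n IH] H; first by rewrite big_ord0.
rewrite big_ord_recr /=; apply: oge_vmin; first by apply: IH => i hi; apply: H; lia.
exact: H.
Qed.
Lemma big_vmin_eq n (h : nat -> option R) l :
  (forall i, (i < n)%N -> oge l (h i)) -> (exists2 i, (i < n)%N & h i = Some l) ->
  \big[@vmin R/None]_(i < n) h i = Some l.
Proof.
elim: n => [|n IH] H [i hi hl]; first by [].
rewrite big_ord_recr /=.
have [lt|ge] := ltnP i n.
  rewrite IH //; first by rewrite vmin_eql //; apply: H.
  - by move=> j hj; apply: H; lia.
  - by exists i.
have ein : i = n by lia.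
subst i; rewrite hl vmin_eqr //; apply: oge_vmin_big => j hj; apply: H; lia.
Qed.
Lemma vle_big_vmin_oge l a : oge l a = vle (Some l) a.
Proof. by case: a. Qed.

Lemma fin_min (h : nat -> option R) n :
  (exists2 j, (j < n)%N & h j != None) ->
  exists t l, [/\ (t < n)%N, h t = Some l, forall j, (j < n)%N -> oge l (h j)
     & forall j, (t < j < n)%N -> ogt l (h j)].
Proof.
elim: n => [|n IH] [j hj hn]; first by [].
case En: (h n) => [u|].
  have [/existsP [j' hn']|] := boolP [exists j : 'I_n, h j != None].
    have [t [l [ht hl H1 H2]]] := IH (ex_intro2 _ _ (nat_of_ord j') (ltn_ord j') hn').
    have [ul|lu] := leP u l.
      exists n, u; split.
      - by [].
      - by rewrite En.
      - move=> i hi; have [->|ne] := eqVneq i n; first by rewrite En /=.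
        by apply: (oge_mono ul); apply: H1; lia.
      - by move=> i; lia.
    exists t, l; split.
    - lia.
    - by [].
    - move=> i hi; have [->|ne] := eqVneq i n; first by rewrite En /= ltW.
      by apply: H1; lia.
    - move=> i hi; have [->|ne] := eqVneq i n; first by rewrite En.
      by apply: H2; lia.
  rewrite negb_exists => /forallP Hn.
  exists n, u; split.
  - by [].
  - by [].
  - move=> i hi; have [->|ne] := eqVneq i n; first by rewrite En /=.
    have hin : (i < n)%N by lia.
    by have := Hn (Ordinal hin); rewrite negbK /= => /eqP ->.
  - by move=> i; lia.
have hjn : (j < n)%N by case: (ltngtP j n) => //; [lia| move=> e; rewrite e En in hn].
have [t [l [ht hl H1 H2]]] := IH (ex_intro2 _ _ j hjn hn).
exists t, l; split.
- lia.
- by [].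
- move=> i hi; have [->|ne] := eqVneq i n; first by rewrite En.
  by apply: H1; lia.
- move=> i hi; have [->|ne] := eqVneq i n; first by rewrite En.
  by apply: H2; lia.
Qed.
End Opt.

Record gval (A : idomainType) (R : realFieldType) (v : A -> option R) : Prop := {
  gv0 : v 0 = None;
  gvfin : forall x, x != 0 -> v x != None;
  gv1 : v 1 = Some 0;
  gvM : forall x y, v (x * y) = vadd (v x) (v y);
  gvD : forall x y, vle (vmin (v x) (v y)) (v (x + y)) }.

Section Gauss.
Variables (R : realFieldType) (A : idomainType) (v : A -> option R).
Hypothesis hv : gval v.

Lemma gvN x : v (- x) = v x.
Proof.
have h := gvM hv (-1) (-1); rewrite mulrNN mulr1 (gv1 hv) in h.
have : v (-1) != None by apply: (gvfin hv); rewrite oppr_eq0 oner_eq0.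
case E: (v (-1)) h => [u|] //= [h] _.
have u0 : u = 0 by lra.
by rewrite -mulN1r (gvM hv) E u0; case: (v x) => // w /=; rewrite add0r.
Qed.

Lemma vsum_oge (I : Type) (r : seq I) (P : pred I) (F : I -> A) l :
  (forall i, P i -> oge l (v (F i))) -> oge l (v (\sum_(i <- r | P i) F i)).
Proof.
move=> H; apply: (big_ind (fun x => oge l (v x))) => //; first by rewrite (gv0 hv).
by move=> x y hx hy; apply: oge_vle (gvD hv x y); apply: oge_vmin.
Qed.
Lemma vsum_ogt (I : Type) (r : seq I) (P : pred I) (F : I -> A) l :
  (forall i, P i -> ogt l (v (F i))) -> ogt l (v (\sum_(i <- r | P i) F i)).
Proof.
move=> H; apply: (big_ind (fun x => ogt l (v x))) => //; first by rewrite (gv0 hv).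
by move=> x y hx hy; apply: ogt_vle (gvD hv x y); apply: ogt_vmin.
Qed.
Lemma vexact x y l : v x = Some l -> ogt l (v y) -> v (x + y) = Some l.
Proof.
move=> hx hy.
have h1 : oge l (v (x + y)).
  by apply: oge_vle (gvD hv x y); apply: oge_vmin; [rewrite hx /=|apply: ogt_oge].
have h2 := gvD hv (x + y) (- y); rewrite addrK gvN hx in h2.
have h3 : ~~ ogt l (v (x + y)).
  apply/negP => h; have := ogt_vle (ogt_vmin h hy) h2; by rewrite /= ltxx.
case: (v (x + y)) h1 h3 => [u|] //= h1 h3.
by congr Some; apply/eqP; rewrite eq_le h1 andbT; rewrite -leNgt in h3.
Qed.

Variable g : R.

Definition gauss_at (p : {poly A}) (t : nat) (l : R) :=
  [/\ v p`_t = Some (l - t%:R * g),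
      forall j, oge (l - j%:R * g) (v p`_j)
    & forall j, (t < j)%N -> ogt (l - j%:R * g) (v p`_j)].

Lemma gauss_mul p q t1 l1 t2 l2 :
  gauss_at p t1 l1 -> gauss_at q t2 l2 -> gauss_at (p * q) (t1 + t2) (l1 + l2).
Proof.
case=> [e1 g1 s1] [e2 g2 s2].
have key j k : (j <= k)%N -> (l1 - j%:R * g) + (l2 - (k - j)%:R * g) = l1 + l2 - k%:R * g.
  by move=> jk; rewrite natrB //; ring.
split.
- have ht : (t1 < (t1 + t2).+1)%N by lia.
  rewrite coefM (bigD1 (Ordinal ht)) //=; apply: vexact.
    by rewrite (gvM hv) addKn e1 e2 /= natrD; congr Some; ring.
  apply: vsum_ogt => i /= hi.
  have hik : (i <= t1 + t2)%N by have := ltn_ord i; lia.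
  rewrite (gvM hv) -(key i) //.
  have [lt|le] := ltnP t1 i.
    by apply: ogt_vadd; [apply: s1 | apply: g2].
  have lt : (i < t1)%N by rewrite ltn_neqAle le andbT; apply: contra hi => /eqP e; apply/eqP/val_inj.
  by apply: ogt_vadd'; [apply: g1 | apply: s2; lia].
- move=> k; rewrite coefM; apply: vsum_oge => i _.
  have hik : (i <= k)%N by have := ltn_ord i; lia.
  by rewrite (gvM hv) -(key i) //; apply: oge_vadd.
- move=> k hk; rewrite coefM; apply: vsum_ogt => i _.
  have hik : (i <= k)%N by have := ltn_ord i; lia.
  rewrite (gvM hv) -(key i) //.
  have [lt|le] := ltnP t1 i.
    by apply: ogt_vadd; [apply: s1 | apply: g2].
  by apply: ogt_vadd'; [apply: g1 | apply: s2; lia].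
Qed.

Lemma gauss_const c u : v c = Some u -> gauss_at c%:P 0 u.
Proof.
move=> hc; split.
- by rewrite coefC /= hc mul0r subr0.
- by case=> [|j]; rewrite coefC /=; [rewrite hc mul0r subr0 /=|rewrite (gv0 hv)].
- by case=> [|j] //= _; rewrite coefC /= (gv0 hv).
Qed.

Lemma gauss_one : gauss_at 1 0 0.
Proof. by apply: gauss_const; apply: (gv1 hv). Qed.

Lemma gauss_prod (I : eqType) (r : seq I) (F : I -> {poly A}) tt ll :
  (forall i, i \in r -> gauss_at (F i) (tt i) (ll i)) ->
  gauss_at (\prod_(i <- r) F i) (\sum_(i <- r) tt i)%N (\sum_(i <- r) ll i).
Proof.
elim: r => [|i r IH] H; first by rewrite !big_nil; apply: gauss_one.
rewrite !big_cons; apply: gauss_mul; first by apply: H; rewrite mem_head.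
by apply: IH => j hj; apply: H; rewrite in_cons hj orbT.
Qed.

Lemma v_prod (I : Type) (r : seq I) (F : I -> A) w :
  (forall i, v (F i) = Some (w i)) -> v (\prod_(i <- r) F i) = Some (\sum_(i <- r) w i).
Proof.
move=> H; elim: r => [|i r IH]; first by rewrite !big_nil (gv1 hv).
by rewrite !big_cons (gvM hv) H IH.
Qed.

Lemma v_pow x u n : v x = Some u -> v (x ^+ n) = Some (u * n%:R).
Proof.
move=> H; elim: n => [|n IH]; first by rewrite expr0 mulr0 (gv1 hv).
by rewrite exprS (gvM hv) H IH /= -addn1 natrD mulrDr mulr1 addrC.
Qed.

Lemma gauss_pow p t l n : gauss_at p t l -> gauss_at (p ^+ n) (t * n) (l * n%:R).
Proof.
move=> H; elim: n => [|n IH]; first by rewrite expr0 muln0 mulr0; apply: gauss_one.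
by rewrite exprS mulnS -addn1 natrD mulrDr mulr1 addrC; apply: gauss_mul.
Qed.

Lemma gauss_X1 b : oge g (v b) -> gauss_at ('X + b%:P) 1 g.
Proof.
move=> hb; split.
- by rewrite coefD coefX coefC /= addr0 (gv1 hv) mul1r subrr.
- case=> [|[|j]]; rewrite coefD coefX coefC /=.
  + by rewrite add0r mul0r subr0.
  + by rewrite addr0 (gv1 hv) mul1r subrr /=.
  + by rewrite addr0 (gv0 hv).
- case=> [|[|j]] //= _; by rewrite coefD coefX coefC /= addr0 (gv0 hv).
Qed.

Lemma gauss_X0 b u : v b = Some u -> u < g -> gauss_at ('X + b%:P) 0 u.
Proof.
move=> hb ug; split.
- by rewrite coefD coefX coefC /= add0r hb mul0r subr0.
- case=> [|[|j]]; rewrite coefD coefX coefC /=.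
  + by rewrite add0r hb mul0r subr0 /=.
  + by rewrite addr0 (gv1 hv) mul1r /= subr_le0 ltW.
  + by rewrite addr0 (gv0 hv).
- case=> [|[|j]] //= _; rewrite coefD coefX coefC /= addr0.
  + by rewrite (gv1 hv) mul1r /= subr_lt0.
  + by rewrite (gv0 hv).
Qed.

Lemma gauss_size p t l : gauss_at p t l -> (t < size p)%N.
Proof.
case=> e _ _; rewrite ltnNge; apply/negP => h.
by rewrite nth_default // (gv0 hv) in e.
Qed.
Lemma gauss_factor (L : comNzRingType) (I : eqType) (phi : {rmorphism {poly L} -> {poly A}})
   (r : seq I) (G : I -> {poly L}) (lc : L) ulc tt ll :
  gauss_at (phi lc%:P) 0 ulc ->
  (forall z, z \in r -> gauss_at (phi (G z)) (tt z) (ll z)) ->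
  gauss_at (phi (lc%:P * \prod_(z <- r) G z)) (\sum_(z <- r) tt z)%N (ulc + \sum_(z <- r) ll z).
Proof.
move=> h1 h2; rewrite rmorphM rmorph_prod -(add0n (\sum_(z <- r) tt z)).
by apply: gauss_mul => //; apply: gauss_prod.
Qed.
End Gauss.

Lemma gval_poly (L : fieldType) (R : realFieldType) (w : {poly L} -> option R) :
  is_valuation w -> gval w.
Proof. by case=> *; constructor. Qed.

Lemma gval_const (L : fieldType) (R : realFieldType) (w : {poly L} -> option R) :
  is_valuation w -> gval (fun c : L => w c%:P).
Proof.
case=> h0 hf h1 hM hD; constructor => //.
- by move=> x hx; apply: hf; rewrite polyC_eq0.
- by move=> x y; rewrite polyCM.
- by move=> x y; rewrite polyCD.
Qed.

Lemma someE (R : realFieldType) (o : option R) : o != None -> o = Some (odflt 0 o).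
Proof. by case: o. Qed.

Lemma ele_trans (R : realFieldType) (a b c : option R) : ele a b -> ele b c -> ele a c.
Proof. by case: a => [x|]; case: b => [y|]; case: c => [z|] //=; apply: le_trans. Qed.

Lemma ele_total (R : realFieldType) (a b : option R) : ele a b = false -> ele b a.
Proof. by case: a => [x|]; case: b => [y|] //= /negbT; rewrite -ltNge => /ltW. Qed.

Lemma ele_big_emax (R : realFieldType) (s : seq nat) (F : nat -> option R) x i :
  i \in s -> ele x (F i) -> ele x (\big[@emax R/None]_(j <- s) F j).
Proof.
elim: s => [|j s IH] //; rewrite in_cons big_cons => /orP [/eqP ->|hi] h.
  rewrite /emax; case: ifP => // hle; exact: ele_trans h hle.
have := IH hi h; rewrite /emax; case: ifP => // /ele_total hle h2; exact: ele_trans h2 hle.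
Qed.

Lemma big_emax_ele (R : realFieldType) (s : seq nat) (P : pred nat) (F : nat -> option R) x :
  (forall i, i \in s -> P i -> ele (F i) x) -> ele (\big[@emax R/None]_(j <- s | P j) F j) x.
Proof.
move=> H; rewrite big_seq_cond; apply: (big_ind (fun o => ele o x)) => //.
  by move=> a b ha hb; rewrite /emax; case: ifP.
by move=> i /andP [h1 h2]; apply: H.
Qed.

Lemma qexp_aux (L : fieldType) (q f : {poly L}) n :
  f = \sum_(i < n) qexp_coef q f i * q ^+ i + (f %/ q ^+ n) * q ^+ n.
Proof.
elim: n => [|n IH]; first by rewrite big_ord0 add0r expr0 divp1 mulr1.
rewrite big_ord_recr /= -addrA; rewrite {1}IH; congr (_ + _).
rewrite {1}(divp_eq (f %/ q ^+ n) q) divp_divl -exprSr /qexp_coef.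
by rewrite mulrDl addrC -mulrA -exprS.
Qed.

Lemma qexp_sum (L : fieldType) (q f : {poly L}) : (1 < size q)%N ->
  f = \sum_(i < size f) qexp_coef q f i * q ^+ i.
Proof.
move=> hq; rewrite {1}(qexp_aux q f (size f)) divp_small ?mul0r ?addr0 //.
have qn0 : q != 0 by rewrite -size_poly_gt0; lia.
have h2 : (0 < size (q ^+ size f))%N by rewrite size_poly_gt0 expf_neq0.
rewrite -(prednK h2) size_exp ltnS leq_pmull //.
by case: (size q) hq => [|[|k]].
Qed.

Section Main.
Variables (K : fieldType) (Kbar : closedFieldType) (iota : {rmorphism K -> Kbar}).
Variables (R : realFieldType) (nu : {poly K} -> option R) (mu : {poly Kbar} -> option R).
Hypotheses (Hnu : is_valuation nu) (Hmu : is_valuation mu).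
Hypothesis Hext : forall f : {poly K}, mu (map_poly iota f) = nu f.
Variables (Q : {poly K}) (a : Kbar).
Hypothesis HQ : key_poly nu Q.
Hypothesis Ha : optimizing_root mu (map_poly iota Q) a.

Let hmu := gval_poly Hmu.
Let hmuC := gval_const Hmu.
Let muC := fun c : Kbar => mu c%:P.

Definition mv (z : Kbar) : R := odflt 0 (mu ('X - z%:P)).
Lemma mvE z : mu ('X - z%:P) = Some (mv z).
Proof. by apply: someE; apply: (val_fin Hmu); rewrite polyXsubC_eq0. Qed.

Let d := mv a.

Definition Pm : {rmorphism {poly Kbar} -> {poly {poly Kbar}}} :=
  (comp_poly ('X + ('X)%:P)) \o (map_poly (@polyC Kbar)).
Definition Tm : {rmorphism {poly Kbar} -> {poly Kbar}} := comp_poly ('X + a%:P).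

Lemma Pm_coef F b : (Pm F)`_b = F^`N(b).
Proof.
rewrite /Pm /=; elim/poly_ind: F b => [|F c IH] b.
  by rewrite rmorph0 comp_poly0 coef0 /nderivn size_poly0 /= poly_def big_ord0.
rewrite rmorphD rmorphM /= map_polyX map_polyC /= comp_polyD comp_polyM comp_polyX comp_polyC.
rewrite mulrDr coefD coefD coefMX coefMC coefC.
case: b => [|b] /=.
  by rewrite nderivn0 IH nderivn0 add0r.
by rewrite addr0 IH IH nderivnMXaddC.
Qed.

Lemma Pm_const c : Pm c%:P = (c%:P)%:P.
Proof. by rewrite /Pm /= map_polyC comp_polyC. Qed.
Lemma Pm_lin z : Pm ('X - z%:P) = 'X + ('X - z%:P)%:P.
Proof.
rewrite /Pm /= rmorphB /= map_polyX map_polyC comp_polyB comp_polyX comp_polyC.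
by rewrite polyCB addrA.
Qed.
Lemma Tm_const c : Tm c%:P = c%:P.
Proof. by rewrite /Tm /= comp_polyC. Qed.
Lemma Tm_lin z : Tm ('X - z%:P) = 'X + (a - z)%:P.
Proof. by rewrite /Tm /= comp_polyB comp_polyX comp_polyC polyCB addrA. Qed.


Lemma factor (f : {poly K}) : f != 0 -> exists r lc ulc,
  [/\ map_poly iota f = lc%:P * \prod_(z <- r) ('X - z%:P), mu lc%:P = Some ulc
    & forall z, root (map_poly iota f) z = (z \in r)].
Proof.
move=> fn0; have [r Hr] := closed_field_poly_normal (map_poly iota f).
set lc := lead_coef _ in Hr.
have lcn0 : lc != 0 by rewrite lead_coef_eq0 map_poly_eq0.
exists r, lc, (odflt 0 (mu lc%:P)); split.
- by rewrite mul_polyC.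
- by apply: someE; apply: (val_fin Hmu); rewrite polyC_eq0.
- by move=> z; rewrite Hr rootZ // root_prod_XsubC.
Qed.

Definition ttP z := if d <= mv z then 1%N else 0%N.
Definition llP z := if d <= mv z then d else mv z.

Lemma Pgauss (r : seq Kbar) lc ulc : mu lc%:P = Some ulc ->
  gauss_at mu d (Pm (lc%:P * \prod_(z <- r) ('X - z%:P)))
    (\sum_(z <- r) ttP z)%N (ulc + \sum_(z <- r) llP z).
Proof.
move=> hl; apply: (gauss_factor hmu) => [|z _].
  by rewrite Pm_const; apply: (gauss_const hmu).
rewrite Pm_lin /ttP /llP; case: ifP => h.
  by apply: (gauss_X1 hmu); rewrite mvE.
by apply: (gauss_X0 hmu (mvE z)); rewrite ltNge h.
Qed.

Lemma mu_fact (r : seq Kbar) lc ulc : mu lc%:P = Some ulc ->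
  mu (lc%:P * \prod_(z <- r) ('X - z%:P)) = Some (ulc + \sum_(z <- r) mv z).
Proof. by move=> h; rewrite (gvM hmu) h (v_prod hmu _ mvE). Qed.

Lemma Qn0 : Q != 0.
Proof. by apply: monic_neq0; case: HQ. Qed.

Lemma rootQ_le z : root (map_poly iota Q) z -> mv z <= d.
Proof. by case: Ha => _ [_ H] /H; rewrite !mvE. Qed.

Lemma epsQ : ele (eps nu Q) (Some d).
Proof.
have [r [lc [ulc [hF hl hr]]]] := factor Qn0.
have [e1 g1 s1] := Pgauss r hl.
have hll : \sum_(z <- r) llP z = \sum_(z <- r) mv z.
  apply: eq_big_seq => z; rewrite -hr => /rootQ_le h; rewrite /llP; case: ifP => // h2.
  by apply/eqP; rewrite eq_le h h2.
apply: big_emax_ele => b; rewrite mem_index_iota => /andP [b1 _] _.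
rewrite /eps_term -!Hext -nderivn_map hF (mu_fact r hl) -hll.
have := g1 b; rewrite -Pm_coef.
case: (mu _) => [w|] //= hw.
have bp : 0 < (b%:R : R) by rewrite ltr0n; lia.
rewrite ler_pdivrMr //; lra.
Qed.

Lemma eps_big (f : {poly K}) (z : Kbar) : f != 0 -> root (map_poly iota f) z -> d <= mv z ->
  ele (Some d) (eps nu f).
Proof.
move=> fn0 hz hdz.
have [r [lc [ulc [hF hl hr]]]] := factor fn0.
have [e1 g1 s1] := Pgauss r hl.
set t := (\sum_(z <- r) ttP z)%N in e1 g1 s1.
set lam := ulc + _ in e1 g1 s1.
have t1 : (1 <= t)%N.
  by rewrite /t (big_rem z) ?hr -?hr //= /ttP hdz.
have Fn0 : map_poly iota f != 0 by rewrite map_poly_eq0.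
have huF := someE (val_fin Hmu Fn0); set uF := odflt _ _ in huF.
have lamF : lam <= uF.
  by have := g1 0%N; rewrite -hF Pm_coef nderivn0 huF /= mul0r subr0.
rewrite -hF Pm_coef in e1.
have tsz : (t < size f)%N.
  rewrite -(size_map_poly iota) ltnNge; apply/negP => h.
  by rewrite (nderivn_poly0 h) (val0 Hmu) in e1.
apply: (@ele_big_emax _ _ _ _ t); first by rewrite mem_index_iota t1 tsz.
rewrite /eps_term -!Hext -nderivn_map huF e1 /=.
have tp : 0 < (t%:R : R) by rewrite ltr0n; lia.
rewrite ler_pdivlMr //; lra.
Qed.

Lemma small_roots (f : {poly K}) (z : Kbar) : f != 0 -> (size f < size Q)%N -> root (map_poly iota f) z ->
  mv z < d.
Proof.
move=> fn0 hs hz; rewrite ltNge; apply/negP => h.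
have := ele_trans epsQ (eps_big fn0 hz h).
case: HQ => _ /[apply]; lia.
Qed.


Definition tQ z := if mv z < d then 0%N else 1%N.

Lemma Tlin_gauss z : mv z <= d ->
  gauss_at muC d (Tm ('X - z%:P)) (tQ z) (mv z).
Proof.
move=> hz; rewrite Tm_lin /tQ.
have e : (a - z)%:P = ('X - z%:P) + - ('X - a%:P) by rewrite polyCB; ring.
case: ifP => h.
  apply: (gauss_X0 hmuC) => //; rewrite /= e; apply: (vexact hmu (mvE z)).
  by rewrite (gvN hmu) mvE.
have -> : mv z = d by apply/eqP; rewrite eq_le hz leNgt h.
apply: (gauss_X1 hmuC); rewrite /= e; apply: oge_vle (gvD hmu _ _).
apply: oge_vmin; first by rewrite mvE /= leNgt h.
by rewrite (gvN hmu) mvE /=.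
Qed.

Lemma Tgauss_small (f : {poly K}) : f != 0 -> (size f < size Q)%N ->
  exists u, mu (map_poly iota f) = Some u /\ gauss_at muC d (Tm (map_poly iota f)) 0 u.
Proof.
move=> fn0 hs; have [r [lc [ulc [hF hl hr]]]] := factor fn0.
exists (ulc + \sum_(z <- r) mv z); split; first by rewrite hF (mu_fact r hl).
have hz z : z \in r -> mv z < d by rewrite -hr; apply: small_roots.
have H : gauss_at muC d (Tm (map_poly iota f))
   (\sum_(z <- r) tQ z)%N (ulc + \sum_(z <- r) mv z).
  rewrite hF; apply: (gauss_factor hmuC (G := fun z => 'X - z%:P)).
    by rewrite Tm_const; apply: (gauss_const hmuC).
  move=> z /hz h; apply: Tlin_gauss; exact: ltW.
suff <- : (\sum_(z <- r) tQ z)%N = 0%N by [].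
by rewrite big_seq big1 // => z /hz; rewrite /tQ => ->.
Qed.
Lemma TgaussQ : exists m uQ, [/\ (0 < m)%N, mu (map_poly iota Q) = Some uQ
  & gauss_at muC d (Tm (map_poly iota Q)) m uQ].
Proof.
have [r [lc [ulc [hF hl hr]]]] := factor Qn0.
exists (\sum_(z <- r) tQ z)%N, (ulc + \sum_(z <- r) mv z); split.
- have ar : a \in r by rewrite -hr; case: Ha => _ [].
  by rewrite (big_rem a) //= /tQ ltxx.
- by rewrite hF (mu_fact r hl).
- rewrite hF; apply: (gauss_factor hmuC (G := fun z => 'X - z%:P)).
    by rewrite Tm_const; apply: (gauss_const hmuC).
  by move=> z; rewrite -hr => /rootQ_le h; apply: Tlin_gauss.
Qed.

Lemma qexp_X (F : {poly Kbar}) i :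
  qexp_coef ('X - a%:P) F i = ((Tm F)`_i)%:P.
Proof.
set p := Tm F.
have hF : F = p \Po ('X - a%:P) by rewrite /p /Tm /= comp_polyXaddC_K.
have Xn0 : 'X^i != 0 :> {poly Kbar} by rewrite monic_neq0 // monicXn.
have hdiv : F %/ ('X - a%:P) ^+ i = (p %/ 'X^i) \Po ('X - a%:P).
  rewrite {1}hF {1}(divp_eq p ('X^i)) comp_polyD comp_polyM.
  have -> : 'X^i \Po ('X - a%:P) = ('X - a%:P) ^+ i.
    by rewrite (rmorphXn (comp_poly ('X - a%:P))) /= comp_polyX.
  apply: divp_addl_mul_small.
  by rewrite size_comp_poly2 ?size_XsubC // size_exp_XsubC -(size_polyXn Kbar i) ltn_modpN0.
rewrite /qexp_coef hdiv modp_XsubC horner_comp !hornerE subrr horner_coef0.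
by rewrite -Pdiv.IdomainMonic.drop_poly_divp coef_drop_poly add0n.
Qed.

Theorem main_sec (f : {poly K}) :
  trunc mu ('X - a%:P) (map_poly iota f) = trunc nu Q f.
Proof.
have [->|fn0] := eqVneq f 0; first by rewrite map_poly0 /trunc !size_poly0 !big_ord0.
set N := size f.
have hQs : (1 < size Q)%N by case: Ha => h _; rewrite size_map_poly in h.
set fi := fun i => qexp_coef Q f i.
have hsz i : (size (fi i) < size Q)%N by rewrite ltn_modp Qn0.
set hval := fun i : nat => nu (fi i * Q ^+ i).
have [m [uQ [m0 huQ gQ]]] := TgaussQ.
have hG i : fi i != 0 -> exists li, hval i = Some li /\
    gauss_at muC d (Tm (map_poly iota (fi i * Q ^+ i))) (m * i) li.
  move=> hn; have [u [hu gu]] := Tgauss_small hn (hsz i).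
  exists (u + uQ * i%:R); split.
    by rewrite /hval -Hext rmorphM rmorphXn (gvM hmu) hu (v_pow hmu _ huQ).
  rewrite rmorphM rmorphXn rmorphM rmorphXn -(add0n (m * i)%N).
  exact: (gauss_mul hmuC gu (gauss_pow hmuC i gQ)).
have hG0 i : fi i = 0 -> hval i = None /\ Tm (map_poly iota (fi i * Q ^+ i)) = 0.
  by move=> e; rewrite /hval e mul0r (val0 Hnu) !rmorph0.
have hex : exists2 j, (j < N)%N & hval j != None.
  have [/existsP [j hj]|hno] := boolP [exists j : 'I_N, hval j != None]; first by exists j.
  exfalso; move: fn0; rewrite (qexp_sum f hQs) big1 ?eqxx // => j _.
  move: hno; rewrite negb_exists => /forallP /(_ j); rewrite negbK /hval => /eqP hj.
  by apply/eqP/negPn/negP => /(val_fin Hnu); rewrite hj.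
have [imax [l0 [him hl0 H1 H2]]] := fin_min hex.
have -> : trunc nu Q f = Some l0.
  by rewrite /trunc; apply: (@big_vmin_eq _ N hval l0) => //; exists imax.
set TF := Tm (map_poly iota f).
have hTF : TF = \sum_(i < N) Tm (map_poly iota (fi i * Q ^+ i)).
  by rewrite /TF {1}(qexp_sum f hQs) !rmorph_sum.
have hge k : oge (l0 - k%:R * d) (muC TF`_k).
  rewrite hTF coef_sum; apply: (vsum_oge hmuC) => i _.
  have [h|h] := eqVneq (fi i) 0; first by rewrite (hG0 _ h).2 coef0 /= (gv0 hmuC).
  have [li [hli [_ gi _]]] := hG i h.
  apply: oge_mono (gi k).
  by have := H1 i (ltn_ord i); rewrite hli /= => hl; lra.
set k0 := (m * imax)%N.
have hex0 : muC TF`_k0 = Some (l0 - k0%:R * d).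
  rewrite hTF coef_sum (bigD1 (Ordinal him)) //=; apply: (vexact hmuC).
    have [h|h] := eqVneq (fi imax) 0; first by rewrite (hG0 _ h).1 in hl0.
    have [li [hli [gi _ _]]] := hG imax h.
    by move: gi; rewrite hl0 in hli; case: hli => <-.
  apply: (vsum_ogt hmuC) => i /= hi.
  have hin : (i : nat) != imax by apply: contra hi => /eqP e; apply/eqP/val_inj.
  have [h|h] := eqVneq (fi i) 0; first by rewrite (hG0 _ h).2 coef0 /= (gv0 hmuC).
  have [li [hli [_ gi si]]] := hG i h.
  have hl := H1 i (ltn_ord i); rewrite hli /= in hl.
  have [lt|ge] := ltP l0 li.
    by apply: ogt_mono (gi k0); lra.
  have eli : li = l0 by apply/eqP; rewrite eq_le ge hl.
  have iim : (i < imax)%N.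
    rewrite ltn_neqAle hin /= leqNgt; apply/negP => hi2.
    have := H2 i; rewrite hi2 ltn_ord hli /= eli ltxx; by move/(_ isT).
  rewrite -eli; apply: si; rewrite /k0 ltn_pmul2l //.
have k0N : (k0 < N)%N.
  have nz : TF`_k0 != 0.
    by apply/eqP => e; rewrite e /muC polyC0 (val0 Hmu) in hex0.
  have -> : N = size TF by rewrite /TF /Tm /= size_comp_poly2 ?size_XaddC // size_map_poly.
  by rewrite ltnNge; apply: contra nz => h; rewrite nth_default.
have hterm i : mu (qexp_coef ('X - a%:P) (map_poly iota f) i * ('X - a%:P) ^+ i)
    = vadd (muC TF`_i) (Some (d * i%:R)).
  by rewrite qexp_X (gvM hmu) (v_pow hmu _ (mvE a)).
rewrite /trunc size_map_poly -/N.
apply: (@big_vmin_eq _ N (fun i => mu (qexp_coef ('X - a%:P) (map_poly iota f) i * ('X - a%:P) ^+ i))).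
  move=> i _; rewrite hterm.
  have e : l0 - i%:R * d + d * i%:R = l0 by ring.
  by rewrite -{1}e; apply: oge_vadd => //=.
exists k0 => //; rewrite hterm hex0 /=; congr Some; ring.
Qed.
End Main.

Unset Implicit Arguments.
Set Strict Implicit.

Theorem theorem3p1 (K : fieldType) (Kbar : closedFieldType)
  (iota : {rmorphism K -> Kbar})
  (Kbar_alg : forall z : Kbar, exists p : {poly K},
      p != 0 /\ root (map_poly iota p) z)
  (R : realFieldType) (nu : {poly K} -> option R) (mu : {poly Kbar} -> option R)
  (Hnu : is_valuation nu) (Hmu : is_valuation mu)
  (Hext : forall f : {poly K}, mu (map_poly iota f) = nu f)
  (Q : {poly K}) (HQ : key_poly nu Q)
  (a : Kbar) (Ha : optimizing_root mu (map_poly iota Q) a) :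
  forall f : {poly K},
    trunc mu ('X - a%:P) (map_poly iota f) = trunc nu Q f.
Proof. by move=> f; apply: main_sec. Qed.
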